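(* For every pair of integers $n\ge 2$ and $1\le r\le n-1$, let $s:=\min\{r,n-r\}$. Then \[ \mathcal{K}^{\mathsf{TS}}(J(n,r))= \begin{cases} \{1\}, & n=2,\\ \{1,n-1\}, & n\ge 3\text{ and }s=1,\\ \{1,s\}, & s\ge 2\text{ and }n=2s,\\ \{1,s,n-s\}, & s\ge 2\text{ and }n>2s. \end{cases} \]
   Context: All graphs are finite, simple, undirected. A clique of a graph $H$ is a set of pairwise adjacent vertices; a $k$-clique is a clique with $k$ vertices. For a graph $H$ and integer $k\ge1$, the Token Sliding graph $\mathsf{TS}_k(H)$ has as vertices the $k$-cliques of $H$, and two $k$-cliques $A,B$ are adjacent iff $A\setminus B=\{u\}$, $B\setminus A=\{v\}$ for some vertices $u,v$ with $uv\in E(H)$. For a graph $G$, $\mathcal{K}^{\mathsf{TS}}(G)=\{k\ge1:\ \exists\text{ a graph }H\text{ with }\mathsf{TS}_k(H)\cong G\}$. The Johnson graph $J(n,r)$ has as vertices the $r$-subsets of $\{1,\dots,n\}$, two being adjacent iff their intersection has size $r-1$. *)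

(* Defs.v *)
From mathcomp Require Import all_boot.
Set Implicit Arguments. Unset Strict Implicit. Unset Printing Implicit Defensive.

Definition simple_graph (T : finType) (e : rel T) : Prop :=
  symmetric e /\ irreflexive e.

Definition graph_iso (V1 V2 : finType) (E1 : rel V1) (E2 : rel V2) : Prop :=
  exists f : V1 -> V2, bijective f /\ forall x y, E2 (f x) (f y) = E1 x y.

Definition is_clique (T : finType) (e : rel T) (A : {set T}) : bool :=
  [forall u in A, forall v in A, (u != v) ==> e u v].

Definition kclique (T : finType) (e : rel T) (k : nat) (A : {set T}) : bool :=
  is_clique e A && (#|A| == k).

Definition TS_vert (T : finType) (e : rel T) (k : nat) :=
  {A : {set T} | kclique e k A}.

Definition TS_adj (T : finType) (e : rel T) (k : nat) : rel (TS_vert e k) :=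
  fun A B => [exists u, exists v,
    [&& (val A :\: val B == [set u]), (val B :\: val A == [set v]) & e u v]].

Definition KTS (V : finType) (E : rel V) (k : nat) : Prop :=
  1 <= k /\ exists (T : finType) (e : rel T),
    simple_graph e /\ @graph_iso (TS_vert e k) V (@TS_adj T e k) E.

Definition J_vert (n r : nat) := {A : {set 'I_n} | #|A| == r}.

Definition J_adj (n r : nat) : rel (J_vert n r) :=
  fun A B => #|val A :&: val B| == r.-1.

(* Main.v *)
Require Import Defs.
From mathcomp Require Import all_boot zify.
Set Implicit Arguments. Unset Strict Implicit. Unset Printing Implicit Defensive.

Lemma iso_of_inj (V1 V2 : finType) (E1 : rel V1) (E2 : rel V2) (g : V2 -> V1) :
  injective g -> (forall x, exists y, x = g y) ->
  (forall a b, E1 (g a) (g b) = E2 a b) -> graph_iso E1 E2.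
Proof.
move=> ginj gsurj gE.
have cV : #|V1| <= #|V2|.
  rewrite -(card_codom ginj); apply: subset_leq_card; apply/subsetP => x _.
  by have [y ->] := gsurj x; exact: codom_f.
have [f gf fg] := inj_card_bij ginj cV.
exists f; split; first by exists g.
by move=> x y; rewrite -gE !fg.
Qed.

Definition cnt (V : finType) (E : rel V) (x y z : V) :=
  #|[set w | E x w && E y w && ((w == z) || E z w)]|.

Lemma cnt_iso (V1 V2 : finType) (E1 : rel V1) (E2 : rel V2) (f : V1 -> V2) :
  bijective f -> (forall a b, E2 (f a) (f b) = E1 a b) ->
  forall x y z, cnt E2 (f x) (f y) (f z) = cnt E1 x y z.
Proof.
move=> fb fE x y z; rewrite /cnt.
have finj := bij_inj fb.
have [g fg gf] := fb.
rewrite -(card_imset _ finj); apply: eq_card => w.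
rewrite -[w]gf mem_imset // !inE !fE (inj_eq finj).
by [].
Qed.

Section SetFacts.
Variable T : finType.
Implicit Types (A B D Z W : {set T}) (a b d t u v : T).

Lemma setD1D1 D a b : a \in D -> b \in D -> a != b -> (D :\ a) :\: (D :\ b) = [set b].
Proof.
move=> aD bD ab; apply/setP => w; rewrite !inE.
by case: (eqVneq w b) => [->|wb] /=; [rewrite bD eq_sym ab | case: (w \in D); rewrite ?andbF].
Qed.

Lemma sub1 D Z : Z \subset D -> #|D| = #|Z|.+1 -> exists2 d, d \in D & Z = D :\ d.
Proof.
move=> ZD cD.
have : #|D :\: Z| == 1 by rewrite cardsD (setIidPr ZD) cD subSnn.
case/cards1P => d hd.
have dD : d \in D by have := set11 d; rewrite -hd inE => /andP[].
exists d => //; apply/setP => w; rewrite !inE.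
have : (w \in D :\: Z) = (w \in [set d]) by rewrite hd.
rewrite !inE.
case: (eqVneq w d) => [->|wd] /=.
  by rewrite ?eqxx dD andbT => /negbTE.

case wZ: (w \in Z); first by rewrite (subsetP ZD).
by rewrite /= => ->.
Qed.

Lemma cardD2 D u v : u \in D -> v \in D -> u != v -> #|D :\ u :\ v| = #|D| - 2.
Proof.
move=> uD vD uv; rewrite (cardsD1 u D) uD (cardsD1 v (D :\ u)) !inE eq_sym uv vD.
by rewrite /= add1n add1n subSS subSS subn0.
Qed.

Lemma in_single_eq A a b c : A = [set c] -> a \in A -> b \in A -> a = b.
Proof. by move=> -> /set1P -> /set1P ->. Qed.

End SetFacts.

Section TS.
Variables (T : finType) (e : rel T) (k : nat).
Hypothesis e_sym : symmetric e.
Hypothesis eirr : irreflexive e.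
Implicit Types (A B D Z W : {set T}) (a b d t u v : T).
Local Notation V := (TS_vert e k).
Local Notation adj := (@TS_adj T e k).

Lemma adjP (x y : V) : reflect (exists u v, [/\ val x :\: val y = [set u], val y :\: val x = [set v] & e u v]) (adj x y).
Proof.
apply: (iffP existsP) => [[u /existsP[v /and3P[/eqP h1 /eqP h2 h3]]]|[u [v [h1 h2 h3]]]].
  by exists u, v.
by exists u; apply/existsP; exists v; rewrite h1 h2 !eqxx.
Qed.

Lemma adj_irr (x : V) : adj x x = false.
Proof.
apply/negbTE/negP => /adjP[u [v [h _ _]]].
by have := set11 u; rewrite -h setDv inE.
Qed.

Lemma cardV (x : V) : #|val x| = k.
Proof. by case: x => A /= /andP[_ /eqP]. Qed.

Lemma cliqueV (x : V) : is_clique e (val x).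
Proof. by case: x => A /= /andP[]. Qed.

Lemma cliqueP A : reflect (forall a b, a \in A -> b \in A -> a != b -> e a b) (is_clique e A).
Proof.
apply: (iffP forall_inP) => [h a b aA bA ab|h a aA].
  by have /forall_inP/(_ b bA)/implyP := h a aA; apply.
by apply/forall_inP => b bA; apply/implyP; apply: h.
Qed.

Lemma clique_sub A B : A \subset B -> is_clique e B -> is_clique e A.
Proof.
move=> AB /cliqueP h; apply/cliqueP => a b aA bA; apply: h; exact: (subsetP AB).
Qed.

Lemma adj_config (x y : V) : adj x y -> exists D u v,
  [/\ val x = D :\ v, val y = D :\ u, [&& u \in D, v \in D & u != v] & is_clique e D].
Proof.
case/adjP => u [v [h1 h2 euv]].
have uA : u \in val x /\ u \notin val y.
  by have := set11 u; rewrite -h1 inE => /andP[].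
have vB : v \in val y /\ v \notin val x.
  by have := set11 v; rewrite -h2 inE => /andP[].
case: uA => uA uB; case: vB => vB vA.
exists (val x :|: val y), u, v; split.
- apply/setP => w; rewrite !inE.
  case: (eqVneq w v) => [->|wv] /=; first by rewrite (negbTE vA).
  case wA: (w \in val x) => //=.
  case wB: (w \in val y) => //=.
  have : w \in val y :\: val x by rewrite inE wA wB.
  by rewrite h2 inE (negbTE wv).
- apply/setP => w; rewrite !inE.
  case: (eqVneq w u) => [->|wu] /=; first by rewrite (negbTE uB).
  case wB: (w \in val y); rewrite ?orbT //.
  case wA: (w \in val x) => //.
  have : w \in val x :\: val y by rewrite inE wA wB.
  by rewrite h1 inE (negbTE wu).
- by rewrite !inE uA vB orbT /=; apply: contraNneq vA => <-.
apply/cliqueP => a b; rewrite !inE.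
have cx := cliqueP _ (cliqueV x); have cy := cliqueP _ (cliqueV y).
case aA: (a \in val x); case bA: (b \in val x) => /= aB bB ab.
- by apply: cx.
- case aB': (a \in val y); first by apply: cy.
  have -> : a = u by apply/set1P; rewrite -h1 inE aA aB'.
  have -> : b = v by apply/set1P; rewrite -h2 inE bA bB.
  exact: euv.
- case bB': (b \in val y); first by apply: cy.
  have -> : b = u by apply/set1P; rewrite -h1 inE bA bB'.
  have -> : a = v by apply/set1P; rewrite -h2 inE aA aB.
  by rewrite e_sym.
- by apply: cy.
Qed.

Lemma adj_in_clique D a b (x y : V) : is_clique e D -> a \in D -> b \in D -> a != b ->
  val x = D :\ a -> val y = D :\ b -> adj x y.
Proof.
move=> /cliqueP cD aD bD ab hx hy; apply/adjP; exists b, a.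
rewrite hx hy setD1D1 // setD1D1 1?eq_sym //; split => //.
by apply: cD => //; rewrite eq_sym.
Qed.


Lemma adj_sym (x y : V) : adj x y = adj y x.
Proof.
by apply/adjP/adjP => -[u [v [h1 h2 h3]]]; exists v, u; rewrite e_sym.
Qed.

Lemma adj_two (x w : V) p q : adj x w -> p \in val x -> p \notin val w ->
  q \in val x -> q \notin val w -> p = q.
Proof.
case/adjP => a [b [h1 _ _]] px pw qx qw.
by apply: (in_single_eq h1); rewrite inE ?px ?qx ?pw ?qw.
Qed.

Lemma adj_intro (x w : V) a b : (forall q, q \in val x -> q \notin val w -> q = a) ->
  b \in val w -> b \notin val x -> e a b -> adj x w.
Proof.
move=> ha bw bx eab.
have cw : #|val w :\: val x| = #|val x :\: val w|.
  by rewrite !cardsD !cardV setIC.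
have le1 : #|val x :\: val w| <= 1.
  rewrite -(cards1 a); apply: subset_leq_card; apply/subsetP => q.
  by rewrite !inE => /andP[qw qx]; apply/eqP; apply: ha.
have ge1 : 0 < #|val w :\: val x|.
  by apply/card_gt0P; exists b; rewrite inE bw bx.
have /cards1P[a0 h0] : #|val x :\: val w| == 1 by rewrite eqn_leq le1 -cw.
have /cards1P[b0 h1] : #|val w :\: val x| == 1 by rewrite eqn_leq ge1 cw le1.
have a0x : a0 \in val x :\: val w by rewrite h0 set11.
have ea0 : a0 = a by move: a0x; rewrite inE => /andP[? ?]; apply: ha.
have eb0 : b = b0 by apply/set1P; rewrite -h1 inE bw bx.
by apply/adjP; exists a, b; rewrite h0 h1 ea0 -eb0; split.
Qed.

Lemma common_nb D u v (x y w : V) : val x = D :\ v -> val y = D :\ u ->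
  u \in D -> v \in D -> u != v -> #|D| = k.+1 -> adj x w -> adj y w ->
  (exists2 d, d \in D :\ u :\ v & val w = D :\ d) \/
  (exists2 t, t \notin D & val w = t |: (D :\ u :\ v)).
Proof.
move=> hx hy uD vD uv cD axw ayw.
have [b [a [_ ha _]]] := adjP _ _ axw.
have [b' [a' [_ ha' _]]] := adjP _ _ ayw.
have : a \in val w :\: val x by rewrite ha set11.
rewrite inE => /andP[ax aw].
case aD: (a \in D).
- left.
  have av : a = v by apply/eqP; move: ax; rewrite hx !inE aD andbT negbK.
  have WD : val w \subset D.
    apply/subsetP => t tw; case tx: (t \in val x).
      by move: tx; rewrite hx inE => /andP[].
    have : t \in val w :\: val x by rewrite inE tx tw.
    by rewrite ha => /set1P ->.
  have cD' : #|D| = #|val w|.+1 by rewrite cardV.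
  have [d dD hd] := sub1 WD cD'.
  exists d => //.
  rewrite !inE dD andbT; apply/andP; split.
    by apply/eqP => dv; move: aw; rewrite av hd dv !inE eqxx.
  apply/eqP => du; subst d.
  have wy : w = y by apply: val_inj; rewrite hd hy.
  by move: ayw; rewrite wy adj_irr.
- right.
  have a'a : a = a'.
    by apply/set1P; rewrite -ha' inE aw hy !inE aD andbF.
  subst a'.
  exists a; first by rewrite aD.
  have sub : val w :\ a \subset D :\ u :\ v.
    apply/subsetP => t; rewrite !inE => /andP[ta tw].
    have tx : t \in val x.
      apply: contraTT ta => tx; rewrite negbK.
      by rewrite -in_set1 -ha inE tx tw.
    have ty : t \in val y.
      apply: contraTT ta => ty; rewrite negbK.
      by rewrite -in_set1 -ha' inE ty tw.
    move: tx ty; rewrite hx hy !inE => /andP[-> ->] /andP[-> _].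
    by [].
  have c1 : #|val w :\ a| = k.-1 by have := cardsD1 a (val w); rewrite aw cardV add1n => /(congr1 predn).
  have c2 : #|D :\ u :\ v| = k.-1 by rewrite cardD2 // cD subn2.
  have /eqP <- : val w :\ a == D :\ u :\ v by rewrite eqEcard sub c1 c2 leqnn.
  by rewrite setD1K.
Qed.


Lemma kcl_sub D d : is_clique e D -> d \in D -> #|D| = k.+1 -> kclique e k (D :\ d).
Proof.
move=> cD dD hD; rewrite /kclique (clique_sub (subsetDl D [set d]) cD) /=.
by move: hD; rewrite (cardsD1 d D) dD add1n => -[->].
Qed.

Lemma cnt_a D u v d0 (x y z : V) : val x = D :\ v -> val y = D :\ u ->
  u \in D -> v \in D -> u != v -> #|D| = k.+1 -> is_clique e D ->
  d0 \in D :\ u :\ v -> val z = D :\ d0 -> cnt adj x y z = k.-1.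
Proof.
move=> hx hy uD vD uv cD clD d0C hz.
rewrite /cnt -(card_imset _ val_inj).
set S := [set w | _].
have -> : val @: S = [set D :\ d | d in D :\ u :\ v].
  apply/setP => W; apply/imsetP/imsetP.
  - case=> w; rewrite inE => /andP[/andP[axw ayw] hzw] ->.
    have [[d dC hd]|[t tD ht]] := common_nb hx hy uD vD uv cD axw ayw.
      by exists d.
    exfalso; case/orP: hzw => [/eqP wz|azw].
      have : t \in val z by rewrite -wz ht !inE eqxx.
      by rewrite hz !inE (negbTE tD) andbF.
    move: d0C; rewrite !inE => /andP[d0v /andP[d0u d0D]].
    suff : u = v by apply/eqP.
    have ut : u != t by apply: contraNneq tD => <-.
    have vt : v != t by apply: contraNneq tD => <-.
    apply: (adj_two azw); rewrite ?hz ?ht !inE.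
    + by rewrite eq_sym d0u uD.
    + by rewrite eqxx (negbTE ut) /= andbF.
    + by rewrite eq_sym d0v vD.
    + by rewrite eqxx (negbTE vt).
  - case=> d dC ->.
    have dD : d \in D by move: dC; rewrite !inE => /and3P[].
    exists (exist (kclique e k) (D :\ d) (kcl_sub clD dD cD) : V) => //.
    move: dC; rewrite !inE => /and3P[dv du _].
    rewrite (adj_in_clique (a:=v) (b:=d) clD) ?(eq_sym v) //.
    rewrite (adj_in_clique (a:=u) (b:=d) clD) ?(eq_sym u) //=.
    have [dd0|dd0] := eqVneq d d0.
      by apply/orP; left; apply/eqP/val_inj; rewrite /= hz dd0.
    move: d0C; rewrite !inE => /and3P[_ _ d0D].
    by rewrite (adj_in_clique (a:=d0) (b:=d) clD) ?orbT // eq_sym.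
rewrite card_in_imset; first by rewrite cardD2 // cD subn2.
move=> d1 d2; rewrite !inE => /and3P[_ _ d1D] /and3P[_ _ d2D] h.
apply/eqP; move: (h) => /setP/(_ d1); rewrite !inE eqxx d1D /=.
by rewrite ?andbT => /esym/negbFE.
Qed.


Lemma cnt_b D u v t0 (x y z : V) : (forall a b, a != b -> e a b) -> 0 < k ->
  val x = D :\ v -> val y = D :\ u ->
  u \in D -> v \in D -> u != v -> #|D| = k.+1 ->
  t0 \notin D -> val z = t0 |: (D :\ u :\ v) -> cnt adj x y z = #|~: D|.
Proof.
move=> ecomp k0 hx hy uD vD uv cD t0D hz.
have notC q : q \notin D -> q \notin D :\ u :\ v.
  by move=> qD; rewrite !inE (negbTE qD) !andbF.
rewrite /cnt -(card_imset _ val_inj).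
set S := [set w | _].
have -> : val @: S = [set t |: (D :\ u :\ v) | t in ~: D].
  apply/setP => W; apply/imsetP/imsetP.
  - case=> w; rewrite inE => /andP[/andP[axw ayw] hzw] ->.
    have [[d dC hd]|[t tD ht]] := common_nb hx hy uD vD uv cD axw ayw; last first.
      by exists t; rewrite ?inE.
    exfalso.
    move: dC; rewrite !inE => /andP[dv /andP[du dD]].
    have ut0 : u != t0 by apply: contraNneq t0D => <-.
    have vt0 : v != t0 by apply: contraNneq t0D => <-.
    case/orP: hzw => [/eqP wz|azw].
      have : t0 \in val w by rewrite wz hz !inE eqxx.
      by rewrite hd !inE (negbTE t0D) andbF.
    suff : u = v by apply/eqP.
    rewrite adj_sym in azw.
    apply: (adj_two azw); rewrite ?hd ?hz !inE.
    + by rewrite eq_sym du uD.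
    + by rewrite eqxx (negbTE ut0) /= andbF.
    + by rewrite eq_sym dv vD.
    + by rewrite eqxx (negbTE vt0).
  - case=> t; rewrite inE => tD ->.
    have kc : kclique e k (t |: (D :\ u :\ v)).
      rewrite /kclique; apply/andP; split.
        by apply/cliqueP => a b _ _; apply: ecomp.
      rewrite cardsU1 notC // cardD2 // cD; apply/eqP.
      by move: k0; case: (k) => // k' _; rewrite add1n subn2.
    exists (exist (kclique e k) _ kc : V) => //.
    have ut : u != t by apply: contraNneq tD => <-.
    have vt : v != t by apply: contraNneq tD => <-.
    rewrite inE; apply/andP; split; first (apply/andP; split).
    + apply: (adj_intro (a:=u) (b:=t)).
      * move=> q; rewrite hx /= !inE => /andP[qv qD]; rewrite negb_or => /andP[_].
        by rewrite qv qD ?andbT negbK => /eqP.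
      * by rewrite /= !inE eqxx.
      * by rewrite hx !inE (negbTE tD) andbF.
      * exact: ecomp.
    + apply: (adj_intro (a:=v) (b:=t)).
      * move=> q; rewrite hy /= !inE => /andP[qu qD]; rewrite negb_or => /andP[_].
        by rewrite qu qD ?andbT negbK => /eqP.
      * by rewrite /= !inE eqxx.
      * by rewrite hy !inE (negbTE tD) andbF.
      * exact: ecomp.
    + have [tt0|tt0] := eqVneq t t0.
        by apply/orP; left; apply/eqP/val_inj; rewrite /= hz tt0.
      apply/orP; right; apply: (adj_intro (a:=t0) (b:=t)).
      * move=> q; rewrite hz /= !inE => /orP[/eqP -> //|qC].
        by rewrite qC orbT.
      * by rewrite /= !inE eqxx.
      * by rewrite hz !inE (negbTE tt0) (negbTE tD) !andbF.
      * by apply: ecomp; rewrite eq_sym.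
rewrite card_in_imset //.
move=> t1 t2; rewrite !inE => t1D _ h.
move: (h) => /setP/(_ t1); rewrite !inE eqxx /= (negbTE t1D) !andbF orbF.
by move=> /esym/eqP.
Qed.

End TS.

Definition Kn (n : nat) : rel 'I_n := fun a b => a != b.
Arguments Kn n : clear implicits.

Lemma Kn_simple n : simple_graph (Kn n).
Proof. by split; [move=> a b; rewrite /Kn eq_sym | move=> a; rewrite /Kn eqxx]. Qed.

Lemma card_diff_sym (T : finType) (A B : {set T}) : #|A| = #|B| -> #|B :\: A| = #|A :\: B|.
Proof. by move=> h; rewrite !cardsD h setIC. Qed.

Lemma J_adj_diff n r (A B : J_vert n r) : 0 < r -> J_adj A B = (#|val A :\: val B| == 1).
Proof.
move=> r0; rewrite /J_adj cardsD.
have hA : #|val A| = r := eqP (valP A).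
have : #|val A :&: val B| <= #|val A| by rewrite subset_leq_card // subsetIl.
by move=> h; apply/eqP/eqP; lia.
Qed.

Lemma TSK_adj n k (x y : TS_vert (Kn n) k) : TS_adj x y = (#|val x :\: val y| == 1).
Proof.
apply/adjP/idP => [[u [v [h1 _ _]]]|h]; first by rewrite h1 cards1.
have /cards1P[u hu] := h.
have : #|val y :\: val x| == 1 by rewrite card_diff_sym ?h // !cardV.
case/cards1P => v hv; exists u, v; split => //.
have : u \in val x :\: val y by rewrite hu set11.
have : v \in val y :\: val x by rewrite hv set11.
rewrite !inE => /andP[vx _] /andP[_ ux]; rewrite /Kn.
by apply: contraNneq vx => <-.
Qed.

Lemma iso_J_TS n r : 0 < r -> graph_iso (@TS_adj _ (Kn n) r) (@J_adj n r).
Proof.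
move=> r0.
have kc (A : J_vert n r) : kclique (Kn n) r (val A).
  by rewrite /kclique (valP A) andbT; apply/cliqueP => a b _ _.
apply: (@iso_of_inj _ _ _ _ (fun A => exist (kclique (Kn n) r) (val A) (kc A))).
- by move=> A B /(congr1 val) /= /val_inj.
- move=> x; have cx : #|val x| == r by rewrite cardV.
  by exists (exist _ (val x) cx); apply: val_inj.
- by move=> A B; rewrite TSK_adj J_adj_diff.
Qed.

Lemma iso_J_TSc n r : 0 < r -> r < n -> graph_iso (@TS_adj _ (Kn n) (n - r)) (@J_adj n r).
Proof.
move=> r0 rn.
have kc (A : J_vert n r) : kclique (Kn n) (n - r) (~: val A).
  rewrite /kclique; apply/andP; split; first by apply/cliqueP => a b _ _.
  have hA : #|val A| = r := eqP (valP A).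
  have := cardsC (val A); rewrite card_ord hA => h.
  by rewrite -(eqn_add2l r) h subnKC // ltnW.
apply: (@iso_of_inj _ _ _ _ (fun A => exist (kclique (Kn n) (n - r)) (~: val A) (kc A))).
- by move=> A B /(congr1 val) /= /setC_inj /val_inj.
- move=> x; have cx : #|~: val x| == r.
    have := cardsC (val x); rewrite card_ord cardV => h.
    by rewrite -(eqn_add2l (n - r)) h subnK // ltnW.
  by exists (exist _ (~: val x) cx); apply: val_inj; rewrite /= setCK.
- move=> A B; rewrite TSK_adj J_adj_diff //=.
  have -> : ~: val A :\: ~: val B = val B :\: val A.
    by apply/setP => q; rewrite !inE negbK andbC.
  by rewrite card_diff_sym // (eqP (valP A)) (eqP (valP B)).
Qed.

Lemma iso_J_TS1 n r : 0 < r -> graph_iso (@TS_adj _ (@J_adj n r) 1) (@J_adj n r).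
Proof.
move=> r0.
have kc (p : J_vert n r) : kclique (@J_adj n r) 1 [set p].
  rewrite /kclique cards1 eqxx andbT; apply/cliqueP => a b /set1P -> /set1P ->.
  by rewrite eqxx.
apply: (@iso_of_inj _ _ _ _ (fun p => exist (kclique (@J_adj n r) 1) [set p] (kc p))).
- by move=> p q /(congr1 val) /= /set1_inj.
- move=> x; have /cards1P[p hp] : #|val x| == 1 by rewrite cardV.
  by exists p; apply: val_inj; rewrite /= hp.
- move=> p q; have [->|pq] := eqVneq p q.
    rewrite adj_irr /J_adj setIid (eqP (valP q)).
    by rewrite eq_sym ltn_eqF // ltn_predL.
  have hd (a b : J_vert n r) : a != b -> [set a] :\: [set b] = [set a].
    move=> ab; apply/setP => w; rewrite !inE.
    by case: (eqVneq w a) => [->|]; rewrite ?ab ?andbF ?andbT.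
  apply/adjP/idP => /= [[u [v [h1 h2 h3]]]|h].
    move: h1 h2; rewrite hd // hd 1?eq_sym // => /set1_inj -> /set1_inj ->.
    exact: h3.
  by exists p, q; rewrite hd // hd // eq_sym.
Qed.

Lemma J_cnt n r : 0 < r -> r < n -> forall P Q R : J_vert n r,
  J_adj P Q -> J_adj P R -> J_adj Q R ->
  cnt (@J_adj n r) P Q R = r.-1 \/ cnt (@J_adj n r) P Q R = n - r.+1.
Proof.
move=> r0 rn P Q R hPQ hPR hQR.
have [h [hb hE]] := iso_J_TS n r0.
have [hi hhi hih] := hb.
rewrite -(hih P) -(hih Q) -(hih R) (cnt_iso hb hE).
have ab : TS_adj (hi P) (hi Q) by rewrite -hE !hih.
have ac : TS_adj (hi P) (hi R) by rewrite -hE !hih.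
have bc : TS_adj (hi Q) (hi R) by rewrite -hE !hih.
have [D [u [v [hx hy /and3P[uD vD uv] clD]]]] := adj_config (Kn_simple n).1 ab.
have cD : #|D| = r.+1 by have := cardsD1 v D; rewrite vD -hx cardV.
case: (common_nb hx hy uD vD uv cD ac bc) => [[d dC hd]|[t tD ht]].
- by left; apply: (cnt_a hx hy uD vD uv cD clD dC hd).
- right; rewrite (cnt_b (e:=Kn n) (Kn_simple n).1 (fun a b (h : a != b) => h) r0 hx hy uD vD uv cD tD ht).
  have h1 := cardsC D; rewrite card_ord cD in h1.
  by apply/eqP; rewrite -(eqn_add2l r.+1) h1 subnKC.
Qed.

Lemma J_edge n r : 0 < r -> r < n -> exists P Q : J_vert n r, J_adj P Q.
Proof.
move=> r0 rn.
have : 0 < #|[set A : {set 'I_n} | #|A| == r]| by rewrite card_draws card_ord bin_gt0 ltnW.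
case/card_gt0P => A; rewrite inE => hA.
have : 0 < #|A| by rewrite (eqP hA).
case/card_gt0P => a aA.
have : 0 < #|~: A|.
  have := cardsC A; rewrite card_ord (eqP hA) => h.
  rewrite lt0n; apply/eqP => h0; move: h; rewrite h0 addn0 => h.
  by rewrite h ltnn in rn.
case/card_gt0P => b; rewrite inE => bA.
have hB : #|b |: (A :\ a)| == r.
  rewrite cardsU1 !inE (negbTE bA) andbF /=.
  have h1 := cardsD1 a A; rewrite aA (eqP hA) in h1.
  by rewrite h1.
exists (exist (fun X : {set 'I_n} => #|X| == r) A hA), (exist (fun X : {set 'I_n} => #|X| == r) _ hB).
rewrite J_adj_diff //=.
have -> : A :\: (b |: (A :\ a)) = [set a].
  apply/setP => w; rewrite !inE.
  case: (eqVneq w a) => [->|wa]; first by rewrite aA andbT orbF; apply: contraNneq bA => <-.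
  by case: (w \in A); rewrite /= ?andbF ?orbT.
by rewrite cards1.
Qed.

Lemma J_simple n r : 0 < r -> simple_graph (@J_adj n r).
Proof.
move=> r0; split; first by move=> A B; rewrite /J_adj setIC.
move=> A; rewrite /J_adj setIid (eqP (valP A)).
by rewrite eq_sym ltn_eqF // ltn_predL.
Qed.

Lemma KTS_J n r : 0 < r -> r < n ->
  forall k, KTS (@J_adj n r) k <-> (k = 1 \/ k = r \/ k = n - r).
Proof.
move=> r0 rn k; split.
- case=> k1 [T [e [[esy eir] [f [fb fE]]]]].
  case: (eqVneq k 1) => [->|k1']; first by left.
  right.
  have k2 : 1 < k by rewrite ltn_neqAle eq_sym k1'.
  have [g fg gf] := fb.
  have [P [Q hPQ]] := J_edge r0 rn.
  have xy : TS_adj (g P) (g Q) by rewrite -fE !gf.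
  have [D [u [v [hx hy /and3P[uD vD uv] clD]]]] := adj_config esy xy.
  have cD : #|D| = k.+1 by have := cardsD1 v D; rewrite vD -hx cardV.
  have : 0 < #|D :\ u :\ v| by rewrite cardD2 // cD; lia.
  case/card_gt0P => d0 d0C.
  have d0D : d0 \in D by move: d0C; rewrite !inE => /and3P[].
  have d0v : v != d0 by move: d0C; rewrite !inE eq_sym => /and3P[].
  have d0u : u != d0 by move: d0C; rewrite !inE (eq_sym d0 u) => /and3P[].
  pose z := exist (kclique e k) (D :\ d0) (kcl_sub clD d0D cD).
  have hz : val z = D :\ d0 by [].
  have hc := cnt_a hx hy uD vD uv cD clD d0C hz.
  have xz : TS_adj (g P) z := adj_in_clique clD vD d0D d0v hx hz.
  have yz : TS_adj (g Q) z := adj_in_clique clD uD d0D d0u hy hz.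
  have := @J_cnt n r r0 rn (f (g P)) (f (g Q)) (f z).
  rewrite !fE (cnt_iso fb fE) hc => /(_ xy xz yz) [] h; lia.
- case=> [->|[->|->]].
  + split => //; exists (J_vert n r), (@J_adj n r); split; first exact: J_simple.
    exact: iso_J_TS1.
  + split => //; exists 'I_n, (Kn n); split; first exact: Kn_simple.
    exact: iso_J_TS.
  + split; first by rewrite subn_gt0.
    exists 'I_n, (Kn n); split; first exact: Kn_simple.
    exact: iso_J_TSc.
Qed.

Theorem theorem3p10 (n r : nat) (hn : 2 <= n) (hr1 : 1 <= r) (hr2 : r <= n - 1) :
  let s := minn r (n - r) in
  (n = 2 -> forall k, KTS (@J_adj n r) k <-> k = 1) /\
  (3 <= n -> s = 1 -> forall k, KTS (@J_adj n r) k <-> (k = 1 \/ k = n - 1)) /\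
  (2 <= s -> n = 2 * s -> forall k, KTS (@J_adj n r) k <-> (k = 1 \/ k = s)) /\
  (2 <= s -> 2 * s < n ->
     forall k, KTS (@J_adj n r) k <-> (k = 1 \/ k = s \/ k = n - s)).
Proof.
move=> s.
have rn : r < n by lia.
have H := KTS_J hr1 rn.
split; [|split; [|split]].
- move=> n2 k; rewrite H; lia.
- move=> n3 s1 k; rewrite H; rewrite /s in s1; lia.
- move=> s2 ns k; rewrite H; rewrite /s in s2 ns *; lia.
- move=> s2 ns k; rewrite H; rewrite /s in s2 ns *; lia.
Qed.
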